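(* Let $N_1$ and $N_2$ be phylogenetic networks on the same set $S$ of taxa. Then $m(N_1,N_2)\ge d_\mu(N_1,N_2)$.
   Context: A phylogenetic network on $S=\{1,\dots,n\}$ is a finite rooted directed acyclic graph whose leaves are bijectively labeled by $S$. For a node $v$, $\mu(v)=(m_1(v),\dots,m_n(v))$ where $m_i(v)$ is the number of directed paths from $v$ to leaf $i$; $\mu(N)$ is the multiset $\{\mu(v)\}$ over all nodes, and $d_\mu(N_1,N_2)=\frac12|\mu(N_1)\bigtriangleup\mu(N_2)|$. The nested label $\ell(v)$ is defined by induction on height: $\ell(v)=\{i\}$ for the leaf labeled $i$, otherwise the multiset of nested labels of the children of $v$; $\Upsilon(N)$ is the multiset of nested labels of all nodes, and $m(N_1,N_2)=\frac12|\Upsilon(N_1)\bigtriangleup\Upsilon(N_2)|$. Here $\bigtriangleup$ is multiset symmetric difference (multiplicity $|M_1(x)-M_2(x)|$) and $|\cdot|$ is the sum of multiplicities. *)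

(* Defs.v *)
From mathcomp Require Import all_boot all_order all_algebra.
Set Implicit Arguments. Unset Strict Implicit. Unset Printing Implicit Defensive.
Import Order.TTheory GRing.Theory Num.Theory.

(* A phylogenetic network on S = {0,...,n-1} (0-based version of {1..n}):
   a finite directed graph (V, e), acyclic, with a root from which every
   node is reachable, whose leaves (nodes without out-edges) are bijectively
   labeled by 'I_n through lab. *)

Definition is_leaf (V : finType) (e : rel V) (v : V) : bool :=
  ~~ [exists w, e v w].

Definition acyclic (V : finType) (e : rel V) : Prop :=
  forall (v : V) (p : seq V), path e v p -> last v p = v -> p = [::].

Definition phylo_network (n : nat) (V : finType) (e : rel V) (lab : 'I_n -> V)
  : Prop :=
  [/\ acyclic e,
      exists r : V, forall v : V, connect e r v,
      injective lab &
      forall v : V, is_leaf e v <-> exists i, lab i = v].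

(* number of directed paths from v to w (a path of k edges is a k-tuple of
   successive nodes; in an acyclic graph every path has < #|V| edges) *)
Definition npaths (V : finType) (e : rel V) (v w : V) : nat :=
  \sum_(k < #|V|) #|[set p : k.-tuple V | path e v p && (last v p == w)]|.

Definition mu (n : nat) (V : finType) (e : rel V) (lab : 'I_n -> V) (v : V)
  : {ffun 'I_n -> nat} := [ffun i => npaths e v (lab i)].

Definition muN (n : nat) (V : finType) (e : rel V) (lab : 'I_n -> V)
  : seq {ffun 'I_n -> nat} := [seq mu e lab v | v <- enum V].

(* A nested label is a finite multiset whose elements are
   nested labels, or a leaf label {i}.  We represent them in GenTree.tree nat:
   GenTree.Leaf i stands for {i}, GenTree.Node 0 s for the multiset of the
   elements of s, with s kept in a canonical (sorted) order so that equality
   of representations is equality of multisets. *)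
Definition nlabel := GenTree.tree nat.

Definition nl_le (a b : nlabel) : bool := (pickle a <= pickle b)%N.

Definition children (V : finType) (e : rel V) (v : V) : seq V :=
  [seq w <- enum V | e v w].

Fixpoint nl_fuel (n : nat) (V : finType) (e : rel V) (lab : 'I_n -> V)
  (k : nat) (v : V) : nlabel :=
  match k with
  | 0 => GenTree.Node 0 [::]
  | k'.+1 =>
      if is_leaf e v then
        GenTree.Leaf (if [pick i | lab i == v] is Some i then nat_of_ord i else 0)
      else GenTree.Node 0 (sort nl_le [seq @nl_fuel n V e lab k' w | w <- children e v])
  end.

(* nested label ell(v), defined by induction on the height of v; fuel #|V|
   exceeds the height of every node in an acyclic graph *)
Definition nested_label (n : nat) (V : finType) (e : rel V) (lab : 'I_n -> V)
  (v : V) : nlabel := nl_fuel e lab #|V| v.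

Definition Upsilon (n : nat) (V : finType) (e : rel V) (lab : 'I_n -> V)
  : seq nlabel := [seq nested_label e lab v | v <- enum V].

Definition msymdiff_size (T : eqType) (s1 s2 : seq T) : nat :=
  \sum_(x <- undup (s1 ++ s2))
     ((count_mem x s1 - count_mem x s2) + (count_mem x s2 - count_mem x s1)).

Definition d_mu (n : nat) (V1 V2 : finType) (e1 : rel V1) (e2 : rel V2)
  (lab1 : 'I_n -> V1) (lab2 : 'I_n -> V2) : rat :=
  ((msymdiff_size (muN e1 lab1) (muN e2 lab2))%:R / 2)%R.

Definition m_dist (n : nat) (V1 V2 : finType) (e1 : rel V1) (e2 : rel V2)
  (lab1 : 'I_n -> V1) (lab2 : 'I_n -> V2) : rat :=
  ((msymdiff_size (Upsilon e1 lab1) (Upsilon e2 lab2))%:R / 2)%R.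

(* Main.v *)
Require Import Defs.
From mathcomp Require Import all_boot all_order all_algebra zify.
Set Implicit Arguments. Unset Strict Implicit. Unset Printing Implicit Defensive.

Definition pk (V : finType) (e : rel V) (k : nat) (v w : V) : nat :=
  #|[set p : k.-tuple V | path e v p && (last v p == w)]|.

Lemma pk0 (V : finType) (e : rel V) (v w : V) : pk e 0 v w = (v == w).
Proof.
rewrite /pk; case: eqP => [->|ne].
  have -> : [set p : 0.-tuple V | path e w p && (last w p == w)] = setT.
    by apply/setP => p; rewrite !inE tuple0 /= eqxx.
  by rewrite cardsT card_tuple.
have -> : [set p : 0.-tuple V | path e v p && (last v p == w)] = set0.
  by apply/setP => p; rewrite !inE tuple0 /=; apply/eqP.
by rewrite cards0.
Qed.

Lemma pkS (V : finType) (e : rel V) (k : nat) (v w : V) :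
  pk e k.+1 v w = \sum_(c | e v c) pk e k c w.
Proof.
rewrite /pk.
set B := [set cq : V * k.-tuple V | e v cq.1 && path e cq.1 cq.2 && (last cq.1 cq.2 == w)].
have -> : [set p : k.+1.-tuple V | path e v p && (last v p == w)] =
          (fun cq : V * k.-tuple V => [tuple of cq.1 :: cq.2]) @: B.
  apply/setP => p; rewrite inE; apply/idP/imsetP.
    move=> H; exists (thead p, [tuple of behead p]); last by rewrite -tuple_eta.
    rewrite inE /=; rewrite [p]tuple_eta /= in H; exact: H.
  by move=> [[c q] Hb ->]; rewrite inE /= in Hb; rewrite /=.
rewrite card_imset; last first.
  move=> [c q] [c' q'] /= /(congr1 val) /= [-> /val_inj ->] //.
have -> : #|B| = \sum_c \sum_(q | (c, q) \in B) 1.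
  by rewrite pair_big_dep -sum1_card; apply: eq_bigl => [[c q]].
rewrite (bigID (fun c => e v c)) /= [X in _ + X]big1 ?addn0; last first.
  move=> c /negbTE H; apply: big1 => q; by rewrite inE /= H.
apply: eq_bigr => c Hc; rewrite -sum1_card; apply: eq_bigl => q.
by rewrite !inE /= Hc.
Qed.

Definition dist (a b : nat) := ((a - b) + (b - a))%N.

Lemma dist_sum (T : Type) (r : seq T) (P : pred T) (a b : T -> nat) :
  dist (\sum_(x <- r | P x) a x) (\sum_(x <- r | P x) b x) <=
  \sum_(x <- r | P x) dist (a x) (b x).
Proof.
elim: r => [|x r IH]; first by rewrite !big_nil.
rewrite !big_cons; case: (P x) => //.
apply: leq_trans (leq_add (leqnn (dist (a x) (b x))) IH).
rewrite /dist; lia.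
Qed.

Lemma count_sum_mem (T : eqType) (u s : seq T) (P : pred T) :
  uniq u -> {subset s <= u} ->
  count P s = \sum_(x <- u | P x) count_mem x s.
Proof.
move=> Uu; elim: s => [|x s IH] sub /=.
  by rewrite big1.
rewrite IH; last by move=> y Hy; apply: sub; rewrite inE Hy orbT.
rewrite big_split /=; congr (_ + _).
have xu : x \in u by apply: sub; rewrite inE eqxx.
rewrite (eq_bigr (fun y => if x == y then 1 else 0)%N); last by move=> y _; case: (x == y).
rewrite -big_mkcondr /= sum1_count.
case Px: (P x).
  rewrite (eq_count (a2 := pred1 x)) ?count_uniq_mem ?xu // => y /=.
  by case: (eqVneq x y) => [<-|ne]; rewrite ?Px ?eqxx /= ?andbF.
rewrite (eq_count (a2 := pred0)) ?count_pred0 // => y /=.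
by case: (eqVneq x y) => [<-|ne]; rewrite ?Px /= ?andbF.
Qed.

Lemma msd_image (T U : eqType) (G : T -> U) (s1 s2 : seq T) :
  msymdiff_size (map G s1) (map G s2) <= msymdiff_size s1 s2.
Proof.
rewrite /msymdiff_size.
set u := undup (s1 ++ s2).
set V := undup _.
have Uu : uniq u by apply: undup_uniq.
have UV : uniq V by apply: undup_uniq.
have s1u : {subset s1 <= u} by move=> x Hx; rewrite mem_undup mem_cat Hx.
have s2u : {subset s2 <= u} by move=> x Hx; rewrite mem_undup mem_cat Hx orbT.
have cm : forall s y, {subset s <= u} ->
    count_mem y (map G s) = \sum_(x <- u | G x == y) count_mem x s.
  by move=> s y sub; rewrite count_map; apply: count_sum_mem.
rewrite (eq_bigr (fun y => dist (\sum_(x <- u | G x == y) count_mem x s1)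
                                (\sum_(x <- u | G x == y) count_mem x s2))); last first.
  by move=> y _; rewrite /dist !cm.
apply: (@leq_trans (\sum_(y <- V) \sum_(x <- u | G x == y) dist (count_mem x s1) (count_mem x s2))).
  by apply: leq_sum => y _; apply: dist_sum.
rewrite (exchange_big_dep xpredT) //=.
apply: eq_leq; rewrite big_seq [RHS]big_seq; apply: eq_bigr => x xu.
have GV : G x \in V by rewrite mem_undup -map_cat map_f // -mem_undup.
rewrite big_const_seq.
have -> : count (fun y => G x == y) V = 1%N.
  by rewrite (eq_count (a2 := pred1 (G x))) ?count_uniq_mem ?GV // => y /=; rewrite eq_sym.
by rewrite /= addn0.
Qed.

Lemma path_notin (V : finType) (e : rel V) (ac : acyclic e) (v : V) (q : seq V) :
  path e v q -> v \notin q.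
Proof.
move=> Hq; apply/negP => vin; case/splitPr: vin Hq => p1 p2.
rewrite cat_path /= => /and3P [H1 H2 _].
have := ac v (rcons p1 v); rewrite rcons_path H1 H2 last_rcons => /(_ erefl erefl).
by case: p1 {H1 H2}.
Qed.

Lemma path_uniq (V : finType) (e : rel V) (ac : acyclic e) (v : V) (p : seq V) :
  path e v p -> uniq (v :: p).
Proof.
elim: p v => [|x p IH] v // Hp; rewrite [uniq _]/=.
rewrite (path_notin ac Hp) /=.
by case/andP: Hp => _ /IH.
Qed.

Lemma path_size (V : finType) (e : rel V) (ac : acyclic e) (v : V) (p : seq V) :
  path e v p -> size p < #|V|.
Proof.
move=> /(path_uniq ac) /card_uniqP /= H.
by have := max_card (mem (v :: p)); rewrite H.
Qed.

Lemma pk_big (V : finType) (e : rel V) (ac : acyclic e) k (v w : V) :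
  #|V| <= k -> pk e k v w = 0.
Proof.
move=> Hk; apply/eqP; rewrite cards_eq0; apply/eqP/setP => p; rewrite !inE.
apply/negbTE/negP => /andP [H _]; have := path_size ac H.
by rewrite size_tuple ltnNge Hk.
Qed.

Lemma npaths_rec (V : finType) (e : rel V) (ac : acyclic e) (v w : V) :
  npaths e v w = (v == w) + \sum_(c | e v c) npaths e c w.
Proof.
have -> : forall c, npaths e c w = \sum_(0 <= k < #|V|) pk e k c w.
  by move=> c; rewrite big_mkord.
have Hz := pk_big ac v w (leqnn #|V|).
transitivity (\sum_(0 <= k < #|V|.+1) pk e k v w).
  by rewrite big_nat_recr //= Hz addn0.
rewrite big_nat_recl // pk0.
congr (_ + _).
rewrite (eq_bigr _ (fun k _ => pkS e k v w)) exchange_big /=.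
by apply: eq_bigr => c _; rewrite /npaths big_mkord.
Qed.

Fixpoint Fl (n : nat) (i : 'I_n) (t : nlabel) : nat :=
  match t with
  | GenTree.Leaf a => (nat_of_ord i == a)
  | GenTree.Node _ s => sumn (map (Fl i) s)
  end.

Lemma Fl_fuel (n : nat) (V : finType) (e : rel V) (lab : 'I_n -> V) :
  phylo_network e lab -> forall k v,
  (forall p, path e v p -> size p < k) ->
  forall i, Fl i (nl_fuel e lab k v) = npaths e v (lab i).
Proof.
case=> ac _ inj leafP; elim=> [|k IH] v Hv i.
  by have := Hv [::] erefl.
rewrite /=; case: ifP => Hleaf.
  have [j Hj] := (leafP v).1 Hleaf.
  case: pickP => [i0 /eqP Hi0|H]; last by have := H j; rewrite Hj eqxx.
  have -> : i0 = j by apply: inj; rewrite Hi0 Hj.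
  rewrite npaths_rec // big_pred0; last first.
    by move=> c; apply/negbTE; move: Hleaf; rewrite /is_leaf => /existsPn.
  rewrite addn0 -Hj (inj_eq inj) eq_sym /=.
  by [].
rewrite npaths_rec //.
have -> : (v == lab i) = false.
  apply/negbTE/eqP => Hvi; move: Hleaf; rewrite (leafP v).2 //; by exists i.
rewrite add0n /=.
rewrite (perm_sumn (perm_map _ (permEl (perm_sort _ _)))) -map_comp.
have -> : map (Fl i \o nl_fuel e lab k) (children e v) =
          map (fun c => npaths e c (lab i)) (children e v).
  apply/eq_in_map => c; rewrite mem_filter => /andP [evc _] /=.
  apply: IH => p Hp.
  by have := Hv (c :: p); rewrite /= evc Hp; apply.
rewrite /children sumnE big_map big_filter.
by rewrite big_enum_cond.
Qed.


Definition Gl (n : nat) (t : nlabel) : {ffun 'I_n -> nat} := [ffun i => Fl i t].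

Lemma muN_Upsilon (n : nat) (V : finType) (e : rel V) (lab : 'I_n -> V) :
  phylo_network e lab -> muN e lab = map (@Gl n) (Upsilon e lab).
Proof.
move=> N; rewrite /muN /Upsilon -map_comp; apply: eq_map => v /=.
apply/ffunP => i; rewrite !ffunE /nested_label (Fl_fuel N) //.
by case: N => ac _ _ _ p /(path_size ac).
Qed.

Import Order.TTheory GRing.Theory Num.Theory.
Local Open Scope ring_scope.

Theorem proposition5 (n : nat) (V1 V2 : finType) (e1 : rel V1) (e2 : rel V2)
  (lab1 : 'I_n -> V1) (lab2 : 'I_n -> V2) :
  phylo_network e1 lab1 -> phylo_network e2 lab2 ->
  d_mu e1 e2 lab1 lab2 <= m_dist e1 e2 lab1 lab2.
Proof.
move=> N1 N2; rewrite /d_mu /m_dist (muN_Upsilon N1) (muN_Upsilon N2).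
rewrite ler_pM2r ?invr_gt0 ?ltr0n // ler_nat.
exact: msd_image.
Qed.
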